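(* Let $\mathbf P\in\mathbb{R}^{n\times n}$ be symmetric positive definite and $\mathbf c\in\mathbb{R}^n$. Then $$\ell_{\mathbf c,\mathbf P}(\beta)<-1\quad\text{for all }\beta>\max\{\lambda_{\min}(\mathbf P)^{-1},\,1-\mathbf c^\top\mathbf c\}.$$
   Context: Let $\mathbf P=\mathbf V\mathbf D\mathbf V^\top$ be a spectral decomposition with $\mathbf V$ orthogonal and $\mathbf D$ diagonal with entries $\lambda_i=D_{ii}$; let $\bar{\mathbf c}=\mathbf V^\top\mathbf c$, $S(\bar{\mathbf c})=\{i:\bar c_i\ne0\}$, and $\lambda_{\min}(\mathbf P)$ the smallest eigenvalue of $\mathbf P$. For $\beta>\lambda_{\min}(\mathbf P)^{-1}$, $\ell_{\mathbf c,\mathbf P}(\beta)=-\beta-\sum_{i\in S(\bar{\mathbf c})}\bar c_i^2\frac{\lambda_i\beta}{\lambda_i\beta-1}$. *)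

(* Defs.v *)
From HB Require Import structures.
From mathcomp Require Import all_boot all_order all_algebra.
Set Implicit Arguments. Unset Strict Implicit. Unset Printing Implicit Defensive.
Import Order.TTheory GRing.Theory Num.Theory.
Local Open Scope ring_scope.

Definition sym_posdef (R : realFieldType) (n : nat) (P : 'M[R]_n) : Prop :=
  P^T = P /\ forall x : 'cV[R]_n, x != 0 -> 0 < (x^T *m P *m x) 0 0.

Definition spectral_decomp (R : realFieldType) (n : nat) (P V D : 'M[R]_n) : Prop :=
  [/\ V^T *m V = 1%:M, V *m V^T = 1%:M, is_diag_mx D & P = V *m D *m V^T].

Definition is_lambda_min (R : realFieldType) (n : nat) (P : 'M[R]_n) (lmin : R) : Prop :=
  eigenvalue P lmin /\ forall a, eigenvalue P a -> lmin <= a.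

Definition ell (R : realFieldType) (n : nat) (V D : 'M[R]_n) (c : 'cV[R]_n) (beta : R) : R :=
  let cbar := V^T *m c in
  - beta - \sum_(i < n | cbar i 0 != 0)
             (cbar i 0) ^+ 2 * ((D i i * beta) / (D i i * beta - 1)).

(* Main.v *)
Require Import Defs.
From HB Require Import structures.
From mathcomp Require Import all_boot all_order all_algebra.
From mathcomp Require Import lra.
Import Order.TTheory GRing.Theory Num.Theory.
Local Open Scope ring_scope.

Theorem proposition2 (R : realFieldType) (n : nat) (P V D : 'M[R]_n)
    (c : 'cV[R]_n) (lmin : R) :
  sym_posdef P -> spectral_decomp P V D -> is_lambda_min P lmin ->
  forall beta : R, Num.max lmin^-1 (1 - (c^T *m c) 0 0) < beta ->
    ell V D c beta < -1.
Proof.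
move=> [PT Ppos] [VTV VVT /diag_mxP [d ->] PE] [eigl lminP] beta.
rewrite gt_max => /andP [hb1 hb2].
have hVTP : V^T *m P = diag_mx d *m V^T.
  by rewrite PE !mulmxA VTV mul1mx.
have Deig : forall i, eigenvalue P (d 0 i).
  move=> i; apply/eigenvalueP; exists (row i V^T).
    by rewrite -row_mul hVTP mul_diag_mx; apply/rowP => j; rewrite !mxE.
  apply/eqP => h0.
  have := congr1 (fun M => (M *m V) 0 i) h0.
  rewrite /= -row_mul VTV mul0mx !mxE eqxx /=.
  by move/eqP; rewrite oner_eq0.
have lpos : 0 < lmin.
  case/eigenvalueP: eigl => v hv vn0.
  have xn0 : v^T != 0 by rewrite -trmx0 (inj_eq trmx_inj).
  have := Ppos _ xn0.
  rewrite trmxK -mulmxA -{1}PT -trmx_mul.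
  rewrite hv linearZ /= -scalemxAr mxE.
  have : 0 <= (v *m v^T) 0 0.
    by rewrite mxE; apply: sumr_ge0 => j _; rewrite mxE -expr2 sqr_ge0.
  move=> h1 h2; rewrite ltNge; apply/negP => hl.
  by move: h2; rewrite ltNge mulr_le0_ge0.
have tgt1 : forall i, 1 < d 0 i * beta.
  move=> i; have hdl := lminP _ (Deig i).
  have dpos : 0 < d 0 i by apply: lt_le_trans hdl.
  have : (d 0 i)^-1 < beta.
    by apply: le_lt_trans hb1; rewrite lef_pV2 ?posrE.
  by move=> h; rewrite -(mulfV (lt0r_neq0 dpos)) ltr_pM2l.
set cb := V^T *m c.
have hcc : (c^T *m c) 0 0 = \sum_(i < n) cb i 0 ^+ 2.
  have -> : c^T *m c = cb^T *m cb.
    by rewrite /cb trmx_mul trmxK mulmxA -(mulmxA c^T) VVT mulmx1.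
  rewrite mxE; under eq_bigr => k _ do rewrite [cb^T _ _]mxE -expr2. done.
have hS : \sum_(i < n) cb i 0 ^+ 2 <= \sum_(i < n | cb i 0 != 0)
             (cb i 0) ^+ 2 * ((d 0 i * beta) / (d 0 i * beta - 1)).
  rewrite [leRHS]big_mkcond /=; apply: ler_sum => i _.
  case: eqP => [->|_]; first by rewrite expr0n.
  apply: ler_peMr; first exact: sqr_ge0.
  have h := tgt1 i.
  rewrite ler_pdivlMr ?subr_gt0 // mul1r; lra.
rewrite /ell -/cb.
under eq_bigr => i _ do rewrite [diag_mx d i i]mxE eqxx mulr1n.
rewrite -hcc in hS; lra.
Qed.
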